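(* Let $\mathbb{F}$ be any field and let $q\in\mathbb{F}$ with $q\neq 0$. Then the tensor rank of $\langle 2,2,2\rangle_q$ over $\mathbb{F}$ is at least $7$.
   Context: Let $e_{ij}$ ($i,j\in\{1,2\}$) be the standard basis of $\mathbb{F}^{2\times 2}$ and $\langle 2,2,2\rangle=\sum_{i,j,k\in\{1,2\}} e_{ij}\otimes e_{jk}\otimes e_{ki}$. For $q\in\mathbb{F}$, the perturbed matrix multiplication tensor is $\langle 2,2,2\rangle_q=\langle 2,2,2\rangle+(q-1)\,e_{11}\otimes e_{11}\otimes e_{11}$, i.e. $\langle 2,2,2\rangle$ with the coefficient of $e_{11}\otimes e_{11}\otimes e_{11}$ replaced by $q$. Tensor rank is the minimal number of simple tensors $v_1\otimes v_2\otimes v_3$ summing to the tensor. *)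

(* Defs.v *)
From HB Require Import structures.
From mathcomp Require Import all_boot all_order all_algebra.
Set Implicit Arguments. Unset Strict Implicit. Unset Printing Implicit Defensive.
Import GRing.Theory.
Local Open Scope ring_scope.

(* Index of the standard basis e_ij of F^{2x2}: a pair (i, j) : 'I_2 * 'I_2. *)
Definition idx := ('I_2 * 'I_2)%type.

(* A tensor in F^{2x2} (x) F^{2x2} (x) F^{2x2}, given by its coordinates
   with respect to the basis e_a (x) e_b (x) e_c. *)
Definition tensor3 (F : fieldType) := idx -> idx -> idx -> F.

(* <2,2,2> = sum_{i,j,k} e_ij (x) e_jk (x) e_ki : coordinate 1 at
   ((i,j),(j,k),(k,i)), 0 elsewhere. *)
Definition mm222 (F : fieldType) : tensor3 F :=
  fun a b c => if [&& a.2 == b.1, b.2 == c.1 & c.2 == a.1] then 1 else 0.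

Definition e11 : idx := (ord0, ord0).
Definition mm222q (F : fieldType) (q : F) : tensor3 F :=
  fun a b c => mm222 F a b c +
    (if [&& a == e11, b == e11 & c == e11] then q - 1 else 0).

Definition rank_decomp (F : fieldType) (T : tensor3 F) (r : nat) : Prop :=
  exists (u v w : 'I_r -> idx -> F),
    forall a b c, T a b c = \sum_(l < r) u l a * v l b * w l c.

(* Main.v *)
Require Import Defs.
From HB Require Import structures.
From mathcomp Require Import all_boot all_order all_algebra.
From mathcomp Require Import ring zify.
Import GRing.Theory.
Local Open Scope ring_scope.
Set Implicit Arguments. Unset Strict Implicit. Unset Printing Implicit Defensive.

Section LinAlg.
Variable F : fieldType.

Lemma rank_of_trivker m n (M : 'M[F]_(m, n)) :
  (forall z : 'cV[F]_n, M *m z = 0 -> z = 0) -> \rank M = n.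
Proof.
move=> H.
have K0 : kermx M^T = 0.
  apply/row_matrixP => i; rewrite row0.
  have h : row i (kermx M^T) *m M^T = 0 by rewrite -row_mul mulmx_ker row0.
  apply: trmx_inj; rewrite trmx0; apply: H.
  by rewrite -[LHS]trmxK trmx_mul trmxK h trmx0.
have := mxrank_ker M^T; rewrite K0 mxrank0 mxrank_tr => /esym/eqP.
rewrite subn_eq0 => h; by apply/eqP; rewrite eqn_leq rank_leq_col h.
Qed.

Lemma ann_contra m n k (M : 'M[F]_(m, n)) (V : 'M[F]_(k, n)) (B : {set 'I_m}) :
  (forall z : 'cV[F]_n, M *m z = 0 -> z = 0) ->
  (k + #|B| < n)%N ->
  (forall l, l \notin B -> (row l M <= V)%MS) -> False.
Proof.
move=> H hk hV.
pose Bm := \matrix_(i < #|B|) row (enum_val i) M.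
pose N := (V + Bm)%MS.
have sMN : (M <= N)%MS.
  apply/row_subP => l; case: (boolP (l \in B)) => lB.
    apply: submx_trans (addsmxSr V Bm).
    have -> : row l M = row (enum_rank_in lB l) Bm by rewrite rowK enum_rankK_in.
    exact: row_sub.
  exact: submx_trans (hV _ lB) (addsmxSl V Bm).
have rN : (\rank N < n)%N.
  apply: leq_ltn_trans hk; apply: leq_trans (mxrank_adds_leqif V Bm) _.
  by rewrite leq_add ?rank_leq_row.
have Kn0 : kermx N^T != 0.
  rewrite -mxrank_eq0 mxrank_ker mxrank_tr -lt0n subn_gt0; exact: rN.
have [i Ki] : exists i, row i (kermx N^T) != 0.
  apply/existsP; apply: contraR Kn0 => /existsPn h.
  apply/eqP/row_matrixP => i; rewrite row0; exact/eqP/negbNE/h.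
set phi := row i (kermx N^T) in Ki.
have hphi : phi *m N^T = 0 by rewrite /phi -row_mul mulmx_ker row0.
have : M *m phi^T = 0.
  apply/row_matrixP => l; rewrite row_mul row0.
  have [D ->] := submxP (submx_trans (row_sub l M) sMN).
  by rewrite -mulmxA -[N *m phi^T]trmxK trmx_mul trmxK hphi trmx0 mulmx0.
move/H/(congr1 trmx); rewrite trmxK trmx0 => phi0.
by rewrite phi0 eqxx in Ki.
Qed.

End LinAlg.
Section Core.
Variable F : fieldType.
Variables (w : 'I_6 -> 'rV[F]_(2*2)).

Lemma outerE (u v : 'rV[F]_2) i j : (u^T *m v) i j = u 0 i * v 0 j.
Proof. by rewrite !mxE big_ord1 !mxE. Qed.

Lemma sum_vec (f : 'I_(2*2) -> F) :
  \sum_t f t = \sum_i \sum_j f (mxvec_index i j).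
Proof.
rewrite (reindex (uncurry (@mxvec_index 2 2))) /=; last first.
  exact: curry_mxvec_bij.
by rewrite pair_big; apply: eq_bigr => -[i j].
Qed.

Definition wz (z : 'cV[F]_(2*2)) l := (w l *m z) 0 0.

Lemma Hz (A : 'I_6 -> 'I_2 -> 'I_2 -> F) (E : 'I_2 -> 'I_2 -> F) :
  (forall i k x y, \sum_l A l i k * w l 0 (mxvec_index x y) = ((x,y) == (k,i))%:R * E i k) ->
  forall z i k, \sum_l A l i k * wz z l = E i k * z (mxvec_index k i) 0.
Proof.
move=> H z i k.
have -> : \sum_l A l i k * wz z l =
   \sum_x \sum_y (\sum_l A l i k * w l 0 (mxvec_index x y)) * z (mxvec_index x y) 0.
  rewrite /wz.
  under eq_bigr => l _ do rewrite mxE sum_vec mulr_sumr.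
  rewrite exchange_big; apply: eq_bigr => x _.
  under eq_bigr => l _ do rewrite mulr_sumr.
  rewrite exchange_big; apply: eq_bigr => y _.
  rewrite mulr_suml; apply: eq_bigr => l _; by rewrite mulrA.
under eq_bigr => x _ do under eq_bigr => y _ do rewrite H.
rewrite (bigD1 k) //= (bigD1 i) //= eqxx mul1r big1 ?addr0; last first.
  by move=> y /negbTE hy; rewrite xpair_eqE hy andbF mul0r mul0r.
rewrite big1 ?addr0 // => x /negbTE hx; apply: big1 => y _.
by rewrite xpair_eqE hx mul0r mul0r.
Qed.

End Core.

Section Vec2.
Variable F : fieldType.

Lemma rV_nz (v : 'rV[F]_2) : v != 0 -> exists k, v 0 k != 0.
Proof.
move=> hv; apply/existsP; apply: contraR hv => /existsPn h.
by apply/eqP/rowP => k; rewrite mxE; apply/eqP/negbNE/h.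
Qed.

Lemma outer0 (u v : 'rV[F]_2) : u != 0 -> v != 0 -> u^T *m v != 0.
Proof.
move=> /rV_nz[i hi] /rV_nz[k hk]; apply/eqP => /matrixP /(_ i k).
by rewrite outerE mxE => /eqP; rewrite mulf_eq0 (negbTE hi) (negbTE hk).
Qed.

Lemma outer_z (u v : 'rV[F]_2) : (u == 0) || (v == 0) -> u^T *m v = 0.
Proof. by case/orP => /eqP ->; rewrite ?trmx0 ?mul0mx ?mulmx0. Qed.

Lemma parL (u v x y : 'rV[F]_2) (c : F) :
  u^T *m v = c *: (x^T *m y) -> v != 0 -> exists r, u = r *: x.
Proof.
move=> h /rV_nz[k hk]; exists (c * y 0 k / v 0 k).
apply/rowP => i; have := congr1 (fun M : 'M[F]_2 => M i k) h; rewrite outerE [X in _ = X]mxE outerE => e.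
rewrite mxE; apply: (mulIf hk); rewrite e; field; exact: hk.
Qed.

Lemma parR (u v x y : 'rV[F]_2) (c : F) :
  u^T *m v = c *: (x^T *m y) -> u != 0 -> exists r, v = r *: y.
Proof.
move=> h /rV_nz[i hi]; exists (c * x 0 i / u 0 i).
apply/rowP => k; have := congr1 (fun M : 'M[F]_2 => M i k) h; rewrite outerE [X in _ = X]mxE outerE => e.
rewrite mxE; apply: (mulfI hi); rewrite e; field; exact: hi.
Qed.

End Vec2.

Section Blocks.
Variable F : fieldType.
Variables (a0 a1 b0 b1 : 'I_6 -> 'rV[F]_2) (w : 'I_6 -> 'rV[F]_(2*2)) (s0 : 'I_2 -> 'I_2 -> F).
Hypothesis hs0 : forall i k, s0 i k != 0.
Hypothesis H00 : forall i k x y,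
  \sum_l (a0 l 0 i * b0 l 0 k) * w l 0 (mxvec_index x y) = ((x,y) == (k,i))%:R * s0 i k.

Definition A00 l := (a0 l)^T *m b0 l.
Definition M00 := \matrix_(l < 6) mxvec (A00 l).
Definition Z0 := [set l | (a0 l == 0) || (b0 l == 0)].

Lemma rowM00 l : row l M00 = mxvec (A00 l).
Proof. by rewrite rowK. Qed.

Lemma step0 (z : 'cV[F]_(2*2)) : M00 *m z = 0 -> z = 0.
Proof.
move=> hz.
have hl : forall l, \sum_i \sum_j a0 l 0 i * b0 l 0 j * z (mxvec_index i j) 0 = 0.
  move=> l; have := congr1 (fun M : 'cV[F]_6 => M l 0) hz; rewrite !mxE sum_vec => e; rewrite -[RHS]e.
  apply: eq_bigr => i _; apply: eq_bigr => j _.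
  by rewrite mxE mxvecE outerE.
apply/colP => t; case/mxvec_indexP: t => x y; rewrite mxE.
have := hs0 x y; apply: contraNeq => hne.
have e : \sum_l (\sum_i \sum_j a0 l 0 i * b0 l 0 j * z (mxvec_index i j) 0) * w l 0 (mxvec_index y x)
         = z (mxvec_index x y) 0 * s0 x y.
  have -> : \sum_l (\sum_i \sum_j a0 l 0 i * b0 l 0 j * z (mxvec_index i j) 0) * w l 0 (mxvec_index y x)
     = \sum_i \sum_j z (mxvec_index i j) 0 * \sum_l (a0 l 0 i * b0 l 0 j) * w l 0 (mxvec_index y x).
    under eq_bigr => l _ do rewrite mulr_suml.
    rewrite exchange_big; apply: eq_bigr => i _.
    under eq_bigr => l _ do rewrite mulr_suml.
    rewrite exchange_big; apply: eq_bigr => j _.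
    rewrite mulr_sumr; apply: eq_bigr => l _; ring.
  under eq_bigr => i _ do under eq_bigr => j _ do rewrite H00.
  rewrite (bigD1 x) //= (bigD1 y) //= eqxx mul1r big1 ?addr0; last first.
    by move=> j /negbTE hj; rewrite xpair_eqE [y == j]eq_sym hj andFb mul0r mulr0.
  rewrite big1 ?addr0 // => i /negbTE hi; apply: big1 => j _.
  by rewrite xpair_eqE [x == i]eq_sym hi andbF mul0r mulr0.
have : z (mxvec_index x y) 0 * s0 x y = 0.
  by rewrite -e big1 // => l _; rewrite hl mul0r.
by move/eqP; rewrite mulf_eq0 (negbTE hne).
Qed.

Lemma A00_Z0 l : l \in Z0 -> A00 l = 0.
Proof. by rewrite inE => h; rewrite /A00 outer_z. Qed.

Lemma step1 : (#|Z0| <= 2)%N.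
Proof.
rewrite leqNgt; apply/negP => h3.
apply: (@ann_contra F 6 (2*2) 0 M00 0 (~: Z0) step0).
  have := cardsC Z0; rewrite card_ord; move: h3; move: #|Z0| #|~: Z0| => n m; lia.
move=> l; rewrite inE negbK => lZ.
by rewrite rowM00 A00_Z0 // linear0 sub0mx.
Qed.

End Blocks.

Lemma Z0_entry (F : fieldType) (a b : 'I_6 -> 'rV[F]_2) l i k :
  l \in Z0 a b -> a l 0 i * b l 0 k = 0.
Proof. by move=> h; rewrite -outerE -/(A00 a b l) A00_Z0 // mxE. Qed.

Lemma notZ0 (F : fieldType) (a b : 'I_6 -> 'rV[F]_2) l :
  l \notin Z0 a b -> a l != 0 /\ b l != 0.
Proof. by rewrite inE negb_or => /andP[]. Qed.

Section CaseA.
Variable F : fieldType.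
Variables (a0 a1 b0 b1 : 'I_6 -> 'rV[F]_2) (w : 'I_6 -> 'rV[F]_(2*2)) (s0 : 'I_2 -> 'I_2 -> F).
Hypothesis hs0 : forall i k, s0 i k != 0.
Hypothesis H00 : forall i k x y,
  \sum_l (a0 l 0 i * b0 l 0 k) * w l 0 (mxvec_index x y) = ((x,y) == (k,i))%:R * s0 i k.
Hypothesis H01 : forall i k x y, \sum_l (a0 l 0 i * b1 l 0 k) * w l 0 (mxvec_index x y) = 0.
Hypothesis H10 : forall i k x y, \sum_l (a1 l 0 i * b0 l 0 k) * w l 0 (mxvec_index x y) = 0.

Lemma H01z z i k : \sum_l (a0 l 0 i * b1 l 0 k) * wz w z l = 0.
Proof.
have := @Hz F w (fun l i k => a0 l 0 i * b1 l 0 k) (fun _ _ => 0) _ z i k.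
by rewrite mul0r; apply => ? ? ? ? /=; rewrite mulr0 H01.
Qed.

Lemma H10z z i k : \sum_l (a1 l 0 i * b0 l 0 k) * wz w z l = 0.
Proof.
have := @Hz F w (fun l i k => a1 l 0 i * b0 l 0 k) (fun _ _ => 0) _ z i k.
by rewrite mul0r; apply => ? ? ? ? /=; rewrite mulr0 H10.
Qed.

Lemma H00z z i k : \sum_l (a0 l 0 i * b0 l 0 k) * wz w z l = s0 i k * z (mxvec_index k i) 0.
Proof. exact: (@Hz F w (fun l i k => a0 l 0 i * b0 l 0 k) s0 H00). Qed.

Definition A01 l := (a0 l)^T *m b1 l.
Definition A10 l := (a1 l)^T *m b0 l.

Lemma caseA o1 o2 : o1 != o2 -> o1 \in Z0 a0 b0 -> o2 \in Z0 a0 b0 ->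
  (#|Z0 a1 b1| <= 2)%N -> False.
Proof.
move=> ho o1Z o2Z hZ1.
have [o2' ho2] : exists o2', o2 = lift o1 o2'.
  by case: (unliftP o1 o2) ho => [j -> _|->]; [exists j | rewrite eqxx].
pose g (i : 'I_4) : 'I_6 := lift o1 (lift o2' i).
have g_inj : injective g by move=> i j /lift_inj/lift_inj.
have gsurj l : l != o1 -> l != o2 -> exists i, l = g i.
  case: (unliftP o1 l) => [j ->|->]; last by rewrite eqxx.
  move=> _; rewrite ho2 (inj_eq (@lift_inj _ o1)).
  by case: (unliftP o2' j) => [i ->|->]; [exists i | rewrite eqxx].
have g1 i : g i != o1 by rewrite eq_sym neq_lift.
have g2 i : g i != o2 by rewrite ho2 /g (inj_eq (@lift_inj _ o1)) eq_sym neq_lift.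
pose WP : 'M[F]_(2*2) := \matrix_(i, t) w (g i) 0 t.
have WPk : forall z : 'cV[F]_(2*2), WP *m z = 0 -> z = 0.
  move=> z hz.
  have hw : forall l, l != o1 -> l != o2 -> wz w z l = 0.
    move=> l h1 h2; have [i ->] := gsurj l h1 h2.
    have := congr1 (fun M : 'cV[F]_(2*2) => M i 0) hz; rewrite !mxE => e.
    rewrite -[RHS]e /wz mxE; apply: eq_bigr => t _; by rewrite mxE.
  apply/colP => t; case/mxvec_indexP: t => x y; rewrite [RHS]mxE.
  have := H00z z y x; rewrite big1 => [/esym/eqP|l _].
    by rewrite mulf_eq0 (negbTE (hs0 y x)) /= => /eqP.
  case: (boolP (l == o1)) => [/eqP ->|h1]; first by rewrite Z0_entry // mul0r.
  case: (boolP (l == o2)) => [/eqP ->|h2]; first by rewrite Z0_entry // mul0r.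
  by rewrite hw // mulr0.
have uWP : WP \in unitmx by rewrite -row_full_unit /row_full (rank_of_trivker WPk).
pose Zi := invmx WP.
have hZ : WP *m Zi = 1%:M := mulmxV uWP.
have rel : forall p, p \notin Z0 a0 b0 -> exists c1 c2,
   A01 p = c1 *: A01 o1 + c2 *: A01 o2 /\ A10 p = c1 *: A10 o1 + c2 *: A10 o2.
  move=> p hp0.
  have p1 : p != o1 by apply: contraNneq hp0 => ->.
  have p2 : p != o2 by apply: contraNneq hp0 => ->.
  have [i pi] := gsurj p p1 p2.
  pose z := col i Zi.
  have wzl : forall l, l != o1 -> l != o2 -> wz w z l = (l == p)%:R.
    move=> l h1 h2; have [j ->] := gsurj l h1 h2.
    have := congr1 (fun M : 'M[F]_(2*2) => M j i) hZ.
    rewrite mxE [in RHS]mxE pi (inj_eq g_inj) => <-.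
    rewrite /wz mxE; apply: eq_bigr => t _; by rewrite !mxE.
  have spl : forall f : 'I_6 -> F,
      \sum_l f l * wz w z l = f p + f o1 * wz w z o1 + f o2 * wz w z o2.
    move=> f; rewrite (bigD1 o1) //= (bigD1 o2) /=; last by rewrite eq_sym ho.
    rewrite (bigD1 p) /=; last by rewrite p1 p2.
    rewrite big1 ?addr0; last first.
      by move=> l /andP[/andP[h1 h2] h3]; rewrite wzl // (negbTE h3) mulr0.
    by rewrite (wzl p p1 p2) eqxx mulr1; ring.
  exists (- wz w z o1), (- wz w z o2); split.
    apply/matrixP => x y; rewrite !mxE !big_ord1 !mxE.
    have := H01z z x y; rewrite spl => e.
    by rewrite -[LHS]subr0 -e; ring.
  apply/matrixP => x y; rewrite !mxE !big_ord1 !mxE.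
  have := H10z z x y; rewrite spl => e.
  by rewrite -[LHS]subr0 -e; ring.
pose xa := a0 o1 + a0 o2; pose yb := b0 o1 + b0 o2.
apply: (@ann_contra F 6 (2*2) 1 (M00 a0 b0) (mxvec (xa^T *m yb)) (Z0 a1 b1) (step0 hs0 H00)).
  by move: hZ1; move: #|_| => n; lia.
move=> l hl1; rewrite rowM00.
case: (boolP (l \in Z0 a0 b0)) => hl0.
  by rewrite A00_Z0 // linear0 sub0mx.
have [c1 [c2 [e01 e10]]] := rel l hl0.
have [na0 nb0] := notZ0 hl0; have [na1 nb1] := notZ0 hl1.
move: o1Z o2Z; rewrite !inE => o1Z o2Z.
have ha : exists r, a0 l = r *: xa.
  case: (eqVneq (a0 o1) 0) => h1.
    apply: (@parL F _ (b1 l) xa (b1 o2) c2) => //.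
    by move: e01; rewrite /A01 /xa h1 trmx0 mul0mx scaler0 add0r add0r.
  case: (eqVneq (a0 o2) 0) => h2.
    apply: (@parL F _ (b1 l) xa (b1 o1) c1) => //.
    by move: e01; rewrite /A01 /xa h2 trmx0 mul0mx scaler0 addr0 addr0.
  move: o1Z o2Z; rewrite (negbTE h1) (negbTE h2) /= => /eqP hb1 /eqP hb2.
  move: e10; rewrite /A10 hb1 hb2 !mulmx0 !scaler0 addr0 => e10.
  by move: (outer0 na1 nb0); rewrite e10 eqxx.
have hb : exists r, b0 l = r *: yb.
  case: (eqVneq (b0 o1) 0) => h1.
    apply: (@parR F (a1 l) _ (a1 o2) yb c2) => //.
    by move: e10; rewrite /A10 /yb h1 mulmx0 scaler0 add0r add0r.
  case: (eqVneq (b0 o2) 0) => h2.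
    apply: (@parR F (a1 l) _ (a1 o1) yb c1) => //.
    by move: e10; rewrite /A10 /yb h2 mulmx0 scaler0 addr0 addr0.
  move: o1Z o2Z; rewrite (negbTE h1) (negbTE h2) !orbF => /eqP ha1 /eqP ha2.
  move: e01; rewrite /A01 ha1 ha2 !trmx0 !mul0mx !scaler0 addr0 => e01.
  by move: (outer0 na0 nb1); rewrite e01 eqxx.
have [r hr] := ha; have [r' hr'] := hb.
rewrite /A00 hr hr'.
have -> : (r *: xa)^T *m (r' *: yb) = (r * r') *: (xa^T *m yb).
  by apply/matrixP => x y; rewrite !mxE !big_ord1 !mxE; ring.
by rewrite linearZ /= scalemx_sub.
Qed.

End CaseA.

Section Vec2b.
Variable F : fieldType.

Lemma ord2P (j : 'I_2) : j = ord0 \/ j = ord_max.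
Proof. by case: j => [[|[|]]] // ?; [left|right]; apply/val_inj. Qed.

Definition cross (u v : 'rV[F]_2) := u 0 ord0 * v 0 ord_max - u 0 ord_max * v 0 ord0.

Lemma cross_par (x x' : 'rV[F]_2) : x != 0 -> cross x x' = 0 -> exists k, x' = k *: x.
Proof.
move=> /rV_nz[k hk] /eqP; rewrite subr_eq0 => /eqP hc.
exists (x' 0 k / x 0 k); apply/rowP => j; rewrite mxE.
apply: (mulIf hk); rewrite mulrAC divfK //.
case: (ord2P j) => ->; case: (ord2P k) => -> //; [by rewrite mulrC -hc mulrC | by rewrite mulrC hc mulrC].
Qed.

Lemma det_lemma (xc yc x y x' y' : 'rV[F]_2) (al be : F) :
  xc^T *m yc = al *: (x^T *m y) + be *: (x'^T *m y') -> al != 0 -> be != 0 ->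
  cross x x' = 0 \/ cross y y'= 0.
Proof.
move=> h ha hb.
have E i j : xc 0 i * yc 0 j = al * (x 0 i * y 0 j) + be * (x' 0 i * y' 0 j).
  by have := congr1 (fun M : 'M[F]_2 => M i j) h; rewrite !mxE !big_ord1 !mxE.
have : (xc 0 ord0 * yc 0 ord0) * (xc 0 ord_max * yc 0 ord_max)
     - (xc 0 ord0 * yc 0 ord_max) * (xc 0 ord_max * yc 0 ord0) = 0 by ring.
rewrite !E => h2.
have : al * be * (cross x x' * cross y y') = 0 by rewrite -h2 /cross; ring.
move/eqP; rewrite !mulf_eq0 (negbTE ha) (negbTE hb) /= => /orP[]/eqP; by [left|right].
Qed.

Definition Vx (x : 'rV[F]_2) : 'M[F]_(2, 2*2) := \matrix_(k < 2) mxvec (x^T *m delta_mx 0 k).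
Definition Vy (y : 'rV[F]_2) : 'M[F]_(2, 2*2) := \matrix_(k < 2) mxvec ((delta_mx 0 k)^T *m y).

Lemma Vx_sub (x v : 'rV[F]_2) : (mxvec (x^T *m v) <= Vx x)%MS.
Proof.
have -> : mxvec (x^T *m v) = v *m Vx x.
  rewrite mulmx_sum_row {1}(row_sum_delta v) mulmx_sumr linear_sum.
  by apply: eq_bigr => k _; rewrite rowK -scalemxAr linearZ.
exact: submxMl.
Qed.

Lemma Vy_sub (y v : 'rV[F]_2) : (mxvec (v^T *m y) <= Vy y)%MS.
Proof.
have -> : mxvec (v^T *m y) = v *m Vy y.
  rewrite mulmx_sum_row {1}(row_sum_delta v) linear_sum mulmx_suml linear_sum.
  by apply: eq_bigr => k _; rewrite rowK linearZ /= -scalemxAl linearZ.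
exact: submxMl.
Qed.

End Vec2b.

Lemma sub_colmxl (F : fieldType) m1 m2 n (A : 'M[F]_(m1, n)) (B : 'M[F]_(m2, n)) :
  (A <= col_mx A B)%MS.
Proof.
have e : row_mx 1%:M 0 *m col_mx A B = A by rewrite mul_row_col mul1mx mul0mx addr0.
by rewrite -{1}e submxMl.
Qed.

Lemma sub_colmxr (F : fieldType) m1 m2 n (A : 'M[F]_(m1, n)) (B : 'M[F]_(m2, n)) :
  (B <= col_mx A B)%MS.
Proof.
have e : row_mx 0 1%:M *m col_mx A B = B by rewrite mul_row_col mul1mx mul0mx add0r.
by rewrite -{1}e submxMl.
Qed.

Lemma mxvec_eq0 (F : fieldType) (A : 'M[F]_2) : (mxvec A == 0) = (A == 0).
Proof.
apply/eqP/eqP => [h|->]; last exact: linear0.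
by rewrite -[A]mxvecK h linear0.
Qed.

Lemma arith2 n : (n <= 1)%N -> (2 + n < 2*2)%N.
Proof. lia. Qed.

Section CaseB.
Variable F : fieldType.
Variables (a0 a1 b0 b1 : 'I_6 -> 'rV[F]_2) (w : 'I_6 -> 'rV[F]_(2*2)) (s0 s1 : 'I_2 -> 'I_2 -> F).
Hypothesis hs0 : forall i k, s0 i k != 0.
Hypothesis hs1 : forall i k, s1 i k != 0.
Hypothesis H00 : forall i k x y,
  \sum_l (a0 l 0 i * b0 l 0 k) * w l 0 (mxvec_index x y) = ((x,y) == (k,i))%:R * s0 i k.
Hypothesis H11 : forall i k x y,
  \sum_l (a1 l 0 i * b1 l 0 k) * w l 0 (mxvec_index x y) = ((x,y) == (k,i))%:R * s1 i k.
Hypothesis H01 : forall i k x y, \sum_l (a0 l 0 i * b1 l 0 k) * w l 0 (mxvec_index x y) = 0.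
Hypothesis H10 : forall i k x y, \sum_l (a1 l 0 i * b0 l 0 k) * w l 0 (mxvec_index x y) = 0.

Definition Wm := \matrix_(l < 6) w l.
Definition Smat := \matrix_(l < 6) row_mx (mxvec (A01 a0 b1 l)) (mxvec (A10 a1 b0 l)).
Definition cv l := row l Smat.

Lemma Wm_ker (z : 'cV[F]_(2*2)) : Wm *m z = 0 -> z = 0.
Proof.
move=> hz; apply/colP => t; case/mxvec_indexP: t => x y; rewrite [RHS]mxE.
have := H00z H00 z y x; rewrite big1 => [/esym/eqP|l _].
  by rewrite mulf_eq0 (negbTE (hs0 y x)) /= => /eqP.
have := congr1 (fun M : 'cV[F]_6 => M l 0) hz; rewrite !mxE => e.
have -> : wz w z l = 0 by rewrite -e /wz mxE; apply: eq_bigr => t _; rewrite mxE.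
by rewrite mulr0.
Qed.

Lemma rank_Smat : (\rank Smat <= 2)%N.
Proof.
have rW : \rank Wm = (2*2)%N := rank_of_trivker Wm_ker.
have : (Smat^T <= kermx Wm)%MS.
  apply/sub_kermxP/matrixP => t c; rewrite !mxE.
  case/mxvec_indexP: c => x y.
  rewrite (eq_bigr (fun l => Smat l t * w l 0 (mxvec_index x y))); last first.
    by move=> l _; rewrite !mxE.
  rewrite -(splitK t); case: (split t) => t'; case/mxvec_indexP: t' => i k /=.
    under eq_bigr => l _ do rewrite mxE row_mxEl mxvecE outerE.
    exact: H01.
  under eq_bigr => l _ do rewrite mxE row_mxEr mxvecE outerE.
  exact: H10.
move/mxrankS; rewrite mxrank_tr mxrank_ker rW.
by move=> h; apply: leq_trans h _.
Qed.

Lemma cvE l : cv l = row_mx (mxvec (A01 a0 b1 l)) (mxvec (A10 a1 b0 l)).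
Proof. by rewrite /cv rowK. Qed.

Lemma cv_lin l a b (al be : F) : cv l = al *: cv a + be *: cv b ->
  A01 a0 b1 l = al *: A01 a0 b1 a + be *: A01 a0 b1 b /\
  A10 a1 b0 l = al *: A10 a1 b0 a + be *: A10 a1 b0 b.
Proof.
rewrite !cvE !scale_row_mx add_row_mx => /eq_row_mx[h1 h2].
by split; apply: (can_inj mxvecK); rewrite linearD !linearZ.
Qed.

Definition full l := (l \notin Z0 a0 b0) && (l \notin Z0 a1 b1).

Lemma cv_nz l : full l -> cv l != 0.
Proof.
case/andP => /notZ0[h1 h2] /notZ0[h3 h4].
by rewrite cvE row_mx_eq0 mxvec_eq0 (negbTE (outer0 h1 h4)).
Qed.

Lemma cv_par l a : (cv l <= cv a)%MS -> exists al, cv l = al *: cv a + 0 *: cv a.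
Proof.
case/submxP => D ->; exists (D 0 0); rewrite scale0r addr0.
by rewrite {1}(mx11_scalar D) mul_scalar_mx.
Qed.

Lemma cv_span a b : full a -> ~~ (cv b <= cv a)%MS ->
  forall l, exists al be, cv l = al *: cv a + be *: cv b.
Proof.
move=> fa nba l.
have sab : (cv a + cv b <= Smat)%MS by rewrite addsmx_sub !row_sub.
have r2 : (2 <= \rank (cv a + cv b))%N.
  have h := mxrank_leqif_sup (addsmxSl (cv a) (cv b)).
  move: (ltn_leqif h); rewrite addsmx_sub submx_refl (negbTE nba) /= rank_rV (cv_nz fa).
  by move=> ->.
have eqS : (Smat <= cv a + cv b)%MS.
  rewrite -(geq_leqif (mxrank_leqif_sup sab)).
  exact: leq_trans rank_Smat r2.
have := submx_trans (row_sub l Smat) eqS; case/sub_addsmxP => -[u v] /= e.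
exists (u 0 0), (v 0 0); rewrite {1}/cv e.
by rewrite {1}(mx11_scalar u) {1}(mx11_scalar v) !mul_scalar_mx.
Qed.


Lemma par00 l a (al : F) : full l -> full a -> cv l = al *: cv a + 0 *: cv a ->
  exists mu, A00 a0 b0 l = mu *: A00 a0 b0 a.
Proof.
case/andP => /notZ0[h1 h2] /notZ0[h3 h4] _.
case/cv_lin => e1 e2; rewrite scale0r addr0 in e1; rewrite scale0r addr0 in e2.
have [r hr] := parL e1 h4; have [r' hr'] := parR e2 h3.
exists (r * r'); rewrite /A00 hr hr'.
by apply/matrixP => x y; rewrite !mxE !big_ord1 !mxE; ring.
Qed.

Lemma caseB2 a b : full a -> full b ->
  (forall l, full l -> (cv l <= cv a)%MS || (cv l <= cv b)%MS) ->
  (#|Z0 a1 b1| <= 1)%N -> False.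
Proof.
move=> fa fb hl hZ1.
apply: (@ann_contra F 6 (2*2) (1+1) (M00 a0 b0)
   (col_mx (row a (M00 a0 b0)) (row b (M00 a0 b0))) (Z0 a1 b1) (step0 hs0 H00)).
  by move: hZ1; move: #|_| => n; lia.
move=> l hl1; case: (boolP (l \in Z0 a0 b0)) => hl0.
  by rewrite [row l _]rowM00 A00_Z0 // linear0 sub0mx.
have fl : full l by rewrite /full hl0 hl1.
case/orP: (hl l fl) => /cv_par[al e].
  have [mu hmu] := par00 fl fa e.
  rewrite !rowM00 hmu linearZ /= scalemx_sub //.
  by rewrite -rowM00 sub_colmxl.
have [mu hmu] := par00 fl fb e.
rewrite !rowM00 hmu linearZ /= scalemx_sub //.
by rewrite -rowM00 sub_colmxr.
Qed.

Lemma caseB1 a b c : full a -> full b -> full c ->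
  ~~ (cv b <= cv a)%MS -> ~~ (cv c <= cv a)%MS -> ~~ (cv c <= cv b)%MS ->
  (#|Z0 a0 b0| <= 1)%N -> (#|Z0 a1 b1| <= 1)%N -> False.
Proof.
move=> fa fb fc nba nca ncb hZ0 hZ1.
have [al [be e]] := cv_span fa nba c.
have hal : al != 0.
  apply: contraNneq ncb => h0; rewrite e h0 scale0r add0r.
  by rewrite scalemx_sub.
have hbe : be != 0.
  apply: contraNneq nca => h0; rewrite e h0 scale0r addr0.
  by rewrite scalemx_sub.
have [e01 _] := cv_lin e.
move: (fa) (fb) => /andP[/notZ0[fa1 fa2] /notZ0[fa3 fa4]] /andP[/notZ0[fb1 fb2] /notZ0[fb3 fb4]].
case: (det_lemma e01 hal hbe) => hc.
  have [ka hka] := cross_par fa1 hc.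
  apply: (@ann_contra F 6 (2*2) 2 (M00 a0 b0) (Vx (a0 a)) (Z0 a1 b1) (step0 hs0 H00)).
    by apply: arith2.
  move=> l hl1; case: (boolP (l \in Z0 a0 b0)) => hl0.
    by rewrite rowM00 A00_Z0 // linear0 sub0mx.
  have [_ hb1l] := notZ0 hl1.
  have [al' [be' el]] := cv_span fa nba l.
  have [e01l _] := cv_lin el.
  have : A01 a0 b1 l = 1 *: ((a0 a)^T *m (al' *: b1 a + (be' * ka) *: b1 b)).
    rewrite e01l /A01 hka.
    by apply/matrixP => x y; rewrite !mxE !big_ord1 !mxE; ring.
  move/parL => /(_ hb1l) [r hr].
  rewrite rowM00 /A00 hr.
  have -> : (r *: a0 a)^T *m b0 l = (a0 a)^T *m (r *: b0 l).
    by apply/matrixP => x y; rewrite !mxE !big_ord1 !mxE; ring.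
  exact: Vx_sub.
have [ka hka] := cross_par fa4 hc.
apply: (@ann_contra F 6 (2*2) 2 (M00 a1 b1) (Vy (b1 a)) (Z0 a0 b0) (step0 hs1 H11)).
  by apply: arith2.
move=> l hl0; case: (boolP (l \in Z0 a1 b1)) => hl1.
  by rewrite rowM00 A00_Z0 // linear0 sub0mx.
have [ha0l _] := notZ0 hl0.
have [al' [be' el]] := cv_span fa nba l.
have [e01l _] := cv_lin el.
have : A01 a0 b1 l = 1 *: ((al' *: a0 a + (be' * ka) *: a0 b)^T *m b1 a).
  rewrite e01l /A01 hka.
  by apply/matrixP => x y; rewrite !mxE !big_ord1 !mxE; ring.
move/parR => /(_ ha0l) [r hr].
rewrite rowM00 /A00 hr.
have -> : (a1 l)^T *m (r *: b1 a) = (r *: a1 l)^T *m b1 a.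
  by apply/matrixP => x y; rewrite !mxE !big_ord1 !mxE; ring.
exact: Vy_sub.
Qed.

Lemma caseB : (#|Z0 a0 b0| <= 1)%N -> (#|Z0 a1 b1| <= 1)%N -> False.
Proof.
move=> hZ0 hZ1.
have [a fa] : exists a, full a.
  case: (boolP [exists a, full a]) => [/existsP //|/existsPn hn].
  have : (#|[set: 'I_6]| <= #|Z0 a0 b0 :|: Z0 a1 b1|)%N.
    apply: subset_leq_card; apply/subsetP => l _.
    by move: (hn l); rewrite /full negb_and !negbK in_setU.
  rewrite cardsT card_ord => h6.
  have := cardsUI (Z0 a0 b0) (Z0 a1 b1).
  by move: h6 hZ0 hZ1; move: #|_ :|: _| #|_ :&: _| #|Z0 a0 b0| #|Z0 a1 b1| => p q r s; clear; lia.
case: (boolP [forall b, full b ==> (cv b <= cv a)%MS]) => [/forallP hall|].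
  apply: (@caseB2 a a fa fa _ hZ1) => l fl.
  by move: (hall l); rewrite fl /= => ->.
case/forallPn => b; rewrite negb_imply => /andP[fb nba].
case: (boolP [forall c, full c ==> (cv c <= cv a)%MS || (cv c <= cv b)%MS]) => [/forallP hall|].
  apply: (@caseB2 a b fa fb _ hZ1) => l fl.
  by move: (hall l); rewrite fl.
case/forallPn => c; rewrite negb_imply negb_or => /andP[fc /andP[nca ncb]].
exact: (caseB1 fa fb fc nba nca ncb hZ0 hZ1).
Qed.

End CaseB.


Lemma core (F : fieldType) (a0 a1 b0 b1 : 'I_6 -> 'rV[F]_2) (w : 'I_6 -> 'rV[F]_(2*2))
  (s0 s1 : 'I_2 -> 'I_2 -> F) :
  (forall i k, s0 i k != 0) -> (forall i k, s1 i k != 0) ->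
  (forall i k x y,
    \sum_l (a0 l 0 i * b0 l 0 k) * w l 0 (mxvec_index x y) = ((x,y) == (k,i))%:R * s0 i k) ->
  (forall i k x y,
    \sum_l (a1 l 0 i * b1 l 0 k) * w l 0 (mxvec_index x y) = ((x,y) == (k,i))%:R * s1 i k) ->
  (forall i k x y, \sum_l (a0 l 0 i * b1 l 0 k) * w l 0 (mxvec_index x y) = 0) ->
  (forall i k x y, \sum_l (a1 l 0 i * b0 l 0 k) * w l 0 (mxvec_index x y) = 0) ->
  False.
Proof.
move=> hs0 hs1 H00 H11 H01 H10.
have hZ0 := step1 hs0 H00; have hZ1 := step1 hs1 H11.
case: (leqP #|Z0 a0 b0| 1) => h0.
  case: (leqP #|Z0 a1 b1| 1) => h1.
    exact: (caseB hs0 hs1 H00 H11 H01 H10 h0 h1).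
  case/card_gt1P: h1 => o1 [o2 [o1Z o2Z ho]].
  exact: (caseA hs1 H11 H10 H01 ho o1Z o2Z hZ0).
case/card_gt1P: h0 => o1 [o2 [o1Z o2Z ho]].
exact: (caseA hs0 H00 H01 H10 ho o1Z o2Z hZ1).
Qed.

Lemma pad_sum (F : fieldType) r n (f : 'I_r -> F) : (r <= n)%N ->
  \sum_(l < n) oapp f 0 (insub (val l)) = \sum_(l < r) f l.
Proof.
move=> hrn.
pose g (k : nat) := oapp f 0 (insub k).
have e : \sum_(l < r) f l = \sum_(l < r) g l.
  by apply: eq_bigr => l _; rewrite /g valK.
rewrite e (big_ord_widen n g hrn) [RHS]big_mkcond; apply: eq_bigr => l _.
case: ltnP => // h; by rewrite /g insubN // -leqNgt.
Qed.

Lemma glue (F : fieldType) (T : tensor3 F) r : (r <= 6)%N -> rank_decomp T r ->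
  exists U V W : 'I_6 -> idx -> F, forall a b c, T a b c = \sum_(l < 6) U l a * V l b * W l c.
Proof.
move=> hr [u [v [w hd]]].
exists (fun l a => oapp (fun l' => u l' a) 0 (insub (val l))),
       (fun l a => oapp (fun l' => v l' a) 0 (insub (val l))),
       (fun l a => oapp (fun l' => w l' a) 0 (insub (val l))).
move=> a b c; rewrite hd -(pad_sum (fun l => u l a * v l b * w l c) hr).
by apply: eq_bigr => l _; case: insub => [l'|] /=; rewrite ?mul0r.
Qed.

Lemma mmq (F : fieldType) (q : F) i j j' k x y :
  mm222q q (i,j) (j',k) (x,y) =
  ((j == j') && ((x,y) == (k,i)))%:R * (if [&& i == ord0, j == ord0 & k == ord0] then q else 1).
Proof.
have n01 : (ord0 == ord_max :> 'I_2) = false by [].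
have n10 : (ord_max == ord0 :> 'I_2) = false by [].
rewrite /mm222q /mm222 /e11 /= !xpair_eqE.
case: (ord2P i) => ->; case: (ord2P j) => ->; case: (ord2P j') => ->;
case: (ord2P k) => ->; case: (ord2P x) => ->; case: (ord2P y) => ->;
rewrite ?eqxx ?n01 ?n10 /=; ring.
Qed.

Unset Implicit Arguments.

Theorem mainTheorem4 (F : fieldType) (q : F) (hq : q != 0) (r : nat) :
  rank_decomp (mm222q q) r -> (7 <= r)%N.
Proof.
move=> hd; rewrite leqNgt; apply/negP => hr.
have [U [V [W hT]]] := glue (hr : (r <= 6)%N) hd.
pose a0 l := \row_(i < 2) U l (i, ord0) : 'rV[F]_2.
pose a1 l := \row_(i < 2) U l (i, ord_max) : 'rV[F]_2.
pose b0 l := \row_(k < 2) V l (ord0, k) : 'rV[F]_2.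
pose b1 l := \row_(k < 2) V l (ord_max, k) : 'rV[F]_2.
pose wv l := mxvec (\matrix_(x < 2, y < 2) W l (x, y)) : 'rV[F]_(2*2).
pose s0 (i k : 'I_2) := if (i == ord0) && (k == ord0) then q else 1.
have n01 : (ord0 == ord_max :> 'I_2) = false by [].
have n10 : (ord_max == ord0 :> 'I_2) = false by [].
have E j j' A B i k x y : (forall l, A l = U l (i, j)) -> (forall l, B l = V l (j', k)) ->
    \sum_l (A l * B l) * wv l 0 (mxvec_index x y) = mm222q q (i, j) (j', k) (x, y).
  move=> hA hB; rewrite hT; apply: eq_bigr => l _; by rewrite hA hB mxvecE mxE.
apply: (@core F a0 a1 b0 b1 wv s0 (fun _ _ => 1)).
- by move=> i k; rewrite /s0; case: ifP => _; [exact: hq | exact: oner_neq0].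
- by move=> i k; exact: oner_neq0.
- move=> i k x y; rewrite (E ord0 ord0 (fun l => a0 l 0 i) (fun l => b0 l 0 k) i k x y) ?mmq;
    try by move=> l; rewrite mxE.
  by rewrite eqxx /= /s0; case: (i == ord0); case: (k == ord0).
- move=> i k x y; rewrite (E ord_max ord_max (fun l => a1 l 0 i) (fun l => b1 l 0 k) i k x y) ?mmq;
    try by move=> l; rewrite mxE.
  by rewrite eqxx /= andbF.
- move=> i k x y; rewrite (E ord0 ord_max (fun l => a0 l 0 i) (fun l => b1 l 0 k) i k x y) ?mmq;
    try by move=> l; rewrite mxE.
  by rewrite n01 /= mul0r.
- move=> i k x y; rewrite (E ord_max ord0 (fun l => a1 l 0 i) (fun l => b0 l 0 k) i k x y) ?mmq;
    try by move=> l; rewrite mxE.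
  by rewrite n10 /= mul0r.
Qed.
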